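(* The doctrine of variations $\Psi_{\mathbf{PAsm}}$ satisfies the Type-theoretic Church's Thesis $(\mathbf{TCT})$.
   Context: $\mathbf{PAsm}$ is the category of partitioned assemblies (pairs $(P,T)$, $P$ a set, $T:P\to\mathbb N$; arrows functions tracked by an index of a partial recursive function). $\Psi_{\mathbf{PAsm}}$ is its doctrine of variations: $A\mapsto$ poset reflection of $\mathbf{PAsm}/A$, with reindexing by weak pullback; it is an arithmetic weak hyperdoctrine with parameterized natural number object $\mathbf N=(\mathbb N,\mathrm{id})$. Let $T:\mathbf N^3\to\mathbf N$, $U:\mathbf N\to\mathbf N$ represent Kleene's primitive recursive T-predicate (0/1-valued) and output function. For a weak exponential $W$ of $\mathbf N$ with $\mathbf N$ with weak evaluation $ev:W\times\mathbf N\to\mathbf N$, put $\overline{ev}(e,x,y,f):=(T(e,x,y)=_{\mathbf N}s(0))\wedge(U(y)=_{\mathbf N}ev(f,x))$ and $\mathbf{Rec}(f):=\exists e:\mathbf N.\forall x:\mathbf N.\exists y:\mathbf N.\overline{ev}(e,x,y,f)$, using the equality, conjunction and quantifiers of the doctrine. $(\mathbf{TCT})$ holds if $\vdash\forall f:W.\mathbf{Rec}(f)$ for some such weak exponential. *)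

(* Defs.v *)
From Stdlib Require Import Arith List.
Import ListNotations.

Definition cpair (x y : nat) : nat := (x + y) * (x + y + 1) / 2 + y.

Inductive code : Type :=
| cZero : code
| cSucc : code
| cProj : nat -> code
| cComp : code -> list code -> code
| cPrec : code -> code -> code
| cMu   : code -> code.

Inductive eval : code -> list nat -> nat -> Prop :=
| ev_zero : forall l, eval cZero l 0
| ev_succ : forall x l, eval cSucc (x :: l) (S x)
| ev_proj : forall i l, i < length l -> eval (cProj i) l (nth i l 0)
| ev_comp : forall f gs l ys v,
    Forall2 (fun g y => eval g l y) gs ys -> eval f ys v -> eval (cComp f gs) l v
| ev_prec0 : forall f g l v, eval f l v -> eval (cPrec f g) (0 :: l) v
| ev_precS : forall f g n l w v,
    eval (cPrec f g) (n :: l) w -> eval g (n :: w :: l) v ->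
    eval (cPrec f g) (S n :: l) v
| ev_mu : forall f l n,
    eval f (n :: l) 0 ->
    (forall m, m < n -> exists k, eval f (m :: l) (S k)) ->
    eval (cMu f) l n.

Fixpoint encode (c : code) : nat :=
  match c with
  | cZero => cpair 0 0
  | cSucc => cpair 1 0
  | cProj i => cpair 2 i
  | cComp f gs =>
      cpair 3 (cpair (encode f)
        ((fix enc_list (l : list code) : nat :=
            match l with
            | nil => 0
            | g :: l' => S (cpair (encode g) (enc_list l'))
            end) gs))
  | cPrec f g => cpair 4 (cpair (encode f) (encode g))
  | cMu f => cpair 5 (encode f)
  end.

(* phi e x v : the e-th unary partial recursive function converges on x
   with value v (indices that do not code a program are nowhere defined). *)
Definition phi (e x v : nat) : Prop :=
  exists c, encode c = e /\ eval c [x] v.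

Record pasm : Type := PAsmObj { car : Type ; tr : car -> nat }.

Definition tracked (A B : pasm) (f : car A -> car B) : Prop :=
  exists e, forall a, phi e (tr A a) (tr B (f a)).

Record arr (A B : pasm) : Type := Arr { fn :> car A -> car B ; fn_tr : tracked A B fn }.
Arguments fn {A B} _ _.

Definition one : pasm := PAsmObj unit (fun _ => 0).
Definition prodP (A B : pasm) : pasm :=
  PAsmObj (car A * car B) (fun p => cpair (tr A (fst p)) (tr B (snd p))).
Definition NN : pasm := PAsmObj nat (fun n => n).

(* Psi(A) is the poset reflection of PAsm/A; we work with the preorder  *)
(* PAsm/A itself (the order of the reflection is the same).            *)

Record pred (A : pasm) : Type := Pred { dom : pasm ; proj : car dom -> car A }.
Arguments dom {A} _.
Arguments proj {A} _ _.

Definition leq {A : pasm} (a b : pred A) : Prop :=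
  exists h : car (dom a) -> car (dom b),
    tracked (dom a) (dom b) h /\ forall x, proj b (h x) = proj a x.

Definition top (A : pasm) : pred A := Pred A A (fun a => a).

Definition reindex {G D : pasm} (f : car G -> car D) (a : pred D) : pred G :=
  Pred G (PAsmObj {p : car G * car (dom a) | f (fst p) = proj a (snd p)}
                  (fun p => cpair (tr G (fst (proj1_sig p))) (tr (dom a) (snd (proj1_sig p)))))
       (fun p => fst (proj1_sig p)).

Definition andP {A : pasm} (a b : pred A) : pred A :=
  Pred A (PAsmObj {p : car (dom a) * car (dom b) | proj a (fst p) = proj b (snd p)}
                  (fun p => cpair (tr (dom a) (fst (proj1_sig p))) (tr (dom b) (snd (proj1_sig p)))))
       (fun p => proj a (fst (proj1_sig p))).

Definition eqdiag (A : pasm) : pred (prodP A A) := Pred (prodP A A) A (fun a => (a, a)).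

Definition eqP {G A : pasm} (t s : car G -> car A) : pred G :=
  @reindex G (prodP A A) (fun g => (t g, s g)) (eqdiag A).

Definition existsP {G B : pasm} (a : pred (prodP G B)) : pred G :=
  Pred G (dom a) (fun x => fst (proj a x)).

(* universal quantifier along the projection G x B -> G: weak dependent
   product; elements are a point g, a section s of alpha over {g} x B and an
   index e tracking s; realized by <tr g, e>. *)
Definition forall_carrier {G B : pasm} (a : pred (prodP G B)) : Type :=
  { g : car G &
    { s : forall b : car B, { x : car (dom a) | proj a x = (g, b) } &
      { e : nat | forall b, phi e (tr B b) (tr (dom a) (proj1_sig (s b))) } } }.

Definition forallP {G B : pasm} (a : pred (prodP G B)) : pred G :=
  Pred G (PAsmObj (forall_carrier a)
                  (fun w => cpair (tr G (projT1 w)) (proj1_sig (projT2 (projT2 w)))))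
       (fun w => projT1 w).

Definition provable (a : pred one) : Prop := leq (top one) a.

Definition is_weak_exp (W : pasm) (ev : arr (prodP W NN) NN) : Prop :=
  forall (X : pasm) (g : arr (prodP X NN) NN),
    exists h : arr X W, forall x n, ev (h x, n) = g (x, n).

Definition N3 : pasm := prodP (prodP NN NN) NN.

Definition kleene_TU (T : arr N3 NN) (U : arr NN NN) : Prop :=
  (forall e x y, T ((e, x), y) = 0 \/ T ((e, x), y) = 1) /\
  (forall e x v, phi e x v <-> exists y, T ((e, x), y) = 1 /\ U y = v).

(* contexts:  1 x W  (f),  then e, x, y : N *)
Definition ctx1 (W : pasm) := prodP one W.
Definition ctx2 (W : pasm) := prodP (ctx1 W) NN.
Definition ctx3 (W : pasm) := prodP (ctx2 W) NN.
Definition ctx4 (W : pasm) := prodP (ctx3 W) NN.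

(* ev-bar(e,x,y,f) := (T(e,x,y) = s(0)) /\ (U(y) = ev(f,x)) *)
Definition evbar (T : arr N3 NN) (U : arr NN NN) (W : pasm)
    (ev : arr (prodP W NN) NN) : pred (ctx4 W) :=
  andP (@eqP (ctx4 W) NN
          (fun p => T ((snd (fst (fst p)), snd (fst p)), snd p))
          (fun _ => S 0))
       (@eqP (ctx4 W) NN
          (fun p => U (snd p))
          (fun p => ev (snd (fst (fst (fst p))), snd (fst p)))).

(* forall f : W. Rec(f) = forall f. exists e. forall x. exists y. evbar *)
Definition all_Rec (T : arr N3 NN) (U : arr NN NN) (W : pasm)
    (ev : arr (prodP W NN) NN) : pred one :=
  @forallP one W (@existsP (ctx1 W) NN (@forallP (ctx2 W) NN
     (@existsP (ctx3 W) NN (evbar T U W ev)))).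

Definition TCT (T : arr N3 NN) (U : arr NN NN) : Prop :=
  exists (W : pasm) (ev : arr (prodP W NN) NN),
    is_weak_exp W ev /\ provable (all_Rec T U W ev).

(* Main.v *)
Require Import Defs.
From Stdlib Require Import Arith Lia List ConstructiveEpsilon Classical.
Import ListNotations.

Fixpoint tri (n : nat) : nat := match n with 0 => 0 | S m => S m + tri m end.

Lemma tri_eq s : (s * (s + 1)) / 2 = tri s.
Proof.
  assert (H : tri s * 2 = s * (s + 1)).
  { induction s; simpl; [reflexivity|]. nia. }
  rewrite <- H, Nat.div_mul; auto.
Qed.

Lemma cpair_tri x y : cpair x y = tri (x + y) + y.
Proof. unfold cpair. now rewrite tri_eq. Qed.

Lemma tri_mono a b : a < b -> tri a + a < tri b.
Proof.
  induction 1; simpl; lia.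
Qed.

Lemma cpair_inj x y x' y' : cpair x y = cpair x' y' -> x = x' /\ y = y'.
Proof.
  rewrite !cpair_tri. intro H.
  destruct (lt_eq_lt_dec (x + y) (x' + y')) as [[Hl|He]|Hl].
  - pose proof (tri_mono _ _ Hl). lia.
  - rewrite He in H. lia.
  - pose proof (tri_mono _ _ Hl). lia.
Qed.

Fixpoint encode_inj (c : code) : forall d, encode c = encode d -> c = d.
Proof.
  destruct c as [| |i|f gs|f g|f]; intros [| |i'|f' gs'|f' g'|f'] H; simpl in H;
    try (apply cpair_inj in H; destruct H as [H1 H2]; discriminate H1); try reflexivity.
  - apply cpair_inj in H as [_ H]. now subst.
  - apply cpair_inj in H as [_ H]. apply cpair_inj in H as [H1 H2].
    apply encode_inj in H1. subst f'. f_equal.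
    revert gs' H2. induction gs as [|g gs IH]; intros [|g' gs'] H2; try discriminate; auto.
    injection H2 as H2. apply cpair_inj in H2 as [H3 H4].
    apply encode_inj in H3. subst. f_equal. now apply IH.
  - apply cpair_inj in H as [_ H]. apply cpair_inj in H as [H1 H2].
    apply encode_inj in H1. apply encode_inj in H2. now subst.
  - apply cpair_inj in H as [_ H]. apply encode_inj in H. now subst.
Qed.

Fixpoint eval_det c l v (H : eval c l v) {struct H} : forall v', eval c l v' -> v = v'.
Proof.
  destruct H; intros v' H'.
  - inversion H'; auto.
  - inversion H'; auto.
  - inversion H'; auto.
  - inversion H'; subst.
    assert (ys = ys0).
    { clear H' H0 H6. revert ys0 H3.
      induction H as [|g y gs ys Hg Hgs IH]; intros ys0 H4; inversion H4; subst; auto.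
      f_equal; [ exact (eval_det _ _ _ Hg _ H1) | exact (IH _ H3) ]. }
    subst. exact (eval_det _ _ _ H0 _ H6).
  - inversion H'; subst. match goal with Hx : eval f l v' |- _ => exact (eval_det _ _ _ H _ Hx) end.
  - inversion H'; subst.
    match goal with Hx : eval (cPrec f g) (n :: l) ?w' |- _ =>
      pose proof (eval_det _ _ _ H _ Hx) end. subst.
    match goal with Hx : eval g _ v' |- _ => exact (eval_det _ _ _ H0 _ Hx) end.
  - inversion H' as [| | | | | |f0 l0 n0 Hz Hlt]; subst.
    destruct (lt_eq_lt_dec n v') as [[Hl|He]|Hl]; auto.
    + destruct (Hlt _ Hl) as [k Hk]. pose proof (eval_det _ _ _ H _ Hk). discriminate.
    + destruct (H0 _ Hl) as [k Hk]. pose proof (eval_det _ _ _ Hk _ Hz). discriminate.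
Qed.

Fixpoint K (n : nat) : code := match n with 0 => cZero | S m => cComp cSucc [K m] end.

Lemma eval_K n l : eval (K n) l n.
Proof.
  induction n; simpl. constructor.
  eapply ev_comp. constructor. exact IHn. constructor. constructor.
Qed.

Lemma eval_proj0 a l : eval (cProj 0) (a :: l) a.
Proof. exact (ev_proj 0 (a :: l) ltac:(simpl; lia)). Qed.
Lemma eval_proj1 a b l : eval (cProj 1) (a :: b :: l) b.
Proof. exact (ev_proj 1 (a :: b :: l) ltac:(simpl; lia)). Qed.
Lemma eval_proj2 a b c l : eval (cProj 2) (a :: b :: c :: l) c.
Proof. exact (ev_proj 2 (a :: b :: c :: l) ltac:(simpl; lia)). Qed.

Lemma comp1 f g l y v : eval g l y -> eval f [y] v -> eval (cComp f [g]) l v.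
Proof. intros. eapply ev_comp; eauto. Qed.
Lemma comp2 f g1 g2 l y1 y2 v : eval g1 l y1 -> eval g2 l y2 -> eval f [y1; y2] v ->
  eval (cComp f [g1; g2]) l v.
Proof. intros. eapply ev_comp; eauto. Qed.
Lemma comp3 f g1 g2 g3 l y1 y2 y3 v : eval g1 l y1 -> eval g2 l y2 -> eval g3 l y3 ->
  eval f [y1; y2; y3] v -> eval (cComp f [g1; g2; g3]) l v.
Proof. intros. eapply ev_comp; eauto. Qed.
Lemma eval_succ x : eval cSucc [x] (S x).
Proof. constructor. Qed.

Definition addC : code := cPrec (cProj 0) (cComp cSucc [cProj 1]).
Lemma eval_add a b : eval addC [a; b] (a + b).
Proof.
  induction a; simpl.
  - constructor. apply eval_proj0.
  - eapply ev_precS. exact IHa. eapply comp1. apply eval_proj1. apply eval_succ.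
Qed.

Definition triC : code := cPrec cZero (cComp addC [cComp cSucc [cProj 0]; cProj 1]).
Lemma eval_tri s : eval triC [s] (tri s).
Proof.
  induction s; simpl.
  - constructor. constructor.
  - eapply ev_precS. exact IHs. eapply comp2.
    eapply comp1. apply eval_proj0. apply eval_succ. apply eval_proj1. apply eval_add.
Qed.

Definition cpairC : code := cComp addC [cComp triC [addC]; cProj 1].
Lemma eval_cpair x y : eval cpairC [x; y] (cpair x y).
Proof.
  rewrite cpair_tri. eapply comp2. eapply comp1. apply eval_add. apply eval_tri.
  apply eval_proj1. apply eval_add.
Qed.
Lemma eval_cpair' g1 g2 l x y : eval g1 l x -> eval g2 l y -> eval (cComp cpairC [g1; g2]) l (cpair x y).
Proof. intros; eapply comp2; eauto; apply eval_cpair. Qed.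

Definition notC : code := cPrec (K 1) (K 0).
Lemma eval_not0 : eval notC [0] 1.
Proof. constructor. apply eval_K. Qed.
Lemma eval_not1 : eval notC [1] 0.
Proof. eapply ev_precS. apply eval_not0. apply eval_K. Qed.

Lemma phi_fun e x v v' : phi e x v -> phi e x v' -> v = v'.
Proof.
  intros [c [Hc Hv]] [c' [Hc' Hv']]. subst e. apply encode_inj in Hc'. subst.
  eapply eval_det; eauto.
Qed.

Lemma track_code A B (f : car A -> car B) (a0 : car A) :
  tracked A B f -> exists c, forall a, eval c [tr A a] (tr B (f a)).
Proof.
  intros [e He]. destruct (He a0) as [c0 [Hc0 _]]. exists c0. intro a.
  destruct (He a) as [c [Hc Hv]]. rewrite <- Hc0 in Hc. apply encode_inj in Hc. now subst.
Qed.

Lemma enc_K_S k : encode (K (S k)) = cpair 3 (cpair (cpair 1 0) (S (cpair (encode (K k)) 0))).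
Proof. reflexivity. Qed.

Definition encKC : code := cPrec (K (cpair 0 0))
  (cComp cpairC [K 3; cComp cpairC [K (cpair 1 0); cComp cSucc [cComp cpairC [cProj 1; K 0]]]]).
Lemma eval_encK k : eval encKC [k] (encode (K k)).
Proof.
  induction k.
  - constructor. apply eval_K.
  - eapply ev_precS. exact IHk. rewrite enc_K_S.
    apply eval_cpair'. apply eval_K. apply eval_cpair'. apply eval_K.
    eapply comp1. apply eval_cpair'. apply eval_proj1. apply eval_K. apply eval_succ.
Qed.

Lemma enc_comp1 F X : encode (cComp F [X]) = cpair 3 (cpair (encode F) (S (cpair (encode X) 0))).
Proof. reflexivity. Qed.
Lemma enc_comp2 F X Y : encode (cComp F [X; Y]) =
  cpair 3 (cpair (encode F) (S (cpair (encode X) (S (cpair (encode Y) 0))))).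
Proof. reflexivity. Qed.

Definition smnC (F : code) : code :=
  cComp cpairC [K 3; cComp cpairC [K (encode F); cComp cSucc [cComp cpairC [encKC;
     cComp cSucc [cComp cpairC [K (encode (cProj 0)); K 0]]]]]].
Lemma eval_smn F k : eval (smnC F) [k] (encode (cComp F [K k; cProj 0])).
Proof.
  rewrite enc_comp2. apply eval_cpair'. apply eval_K. apply eval_cpair'. apply eval_K.
  eapply comp1. apply eval_cpair'. apply eval_encK. eapply comp1. apply eval_cpair'.
  apply eval_K. apply eval_K. apply eval_succ. apply eval_succ.
Qed.
Lemma eval_smn_app F k x v : eval F [k; x] v -> eval (cComp F [K k; cProj 0]) [x] v.
Proof. intros; eapply comp2. apply eval_K. apply eval_proj0. auto. Qed.

Lemma eval_mu cT (r : nat -> nat) P (q : nat -> nat) l m :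
  (forall y, eval cT [q y] (r y)) -> (forall y, eval P (y :: l) (q y)) ->
  r m = 1 -> (forall k, k < m -> r k = 0) ->
  eval (cMu (cComp notC [cComp cT [P]])) l m.
Proof.
  intros HT HP H1 H0. constructor.
  - eapply comp1. eapply comp1. apply HP. apply HT. rewrite H1. apply eval_not1.
  - intros k Hk. exists 0. eapply comp1. eapply comp1. apply HP. apply HT.
    rewrite H0 by auto. apply eval_not0.
Qed.

Definition minT (T : arr N3 NN) (e n : nat) (H : exists y, T ((e, n), y) = 1) : nat :=
  proj1_sig (epsilon_smallest (fun y => T ((e, n), y) = 1) (fun y => Nat.eq_dec (T ((e, n), y)) 1) H).

Lemma minT_spec (T : arr N3 NN) e n H :
  (forall e x y, T ((e, x), y) = 0 \/ T ((e, x), y) = 1) ->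
  T ((e, n), minT T e n H) = 1 /\ forall k, k < minT T e n H -> T ((e, n), k) = 0.
Proof.
  intro H01. unfold minT. match goal with |- context [proj1_sig ?X] => destruct X as [m [Hm Hmin]] end; simpl.
  split. exact Hm. intros k Hk. destruct (H01 e n k) as [Hz|Ho]; auto. apply Hmin in Ho. lia.
Qed.

Definition Wt (T : arr N3 NN) : pasm :=
  PAsmObj {e : nat | forall n, exists y, T ((e, n), y) = 1} (fun w => proj1_sig w).

Definition evf (T : arr N3 NN) (U : arr NN NN) (p : car (prodP (Wt T) NN)) : nat :=
  U (minT T (proj1_sig (fst p)) (snd p) (proj2_sig (fst p) (snd p))).


Opaque cpair encode.
Lemma minT_one (T : arr N3 NN) e n H : T ((e, n), minT T e n H) = 1.
Proof. unfold minT. match goal with |- context [proj1_sig ?X] => destruct X as [m [Hm Hmin]] end; exact Hm. Qed.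



Definition A4 T U Hev := evbar T U (Wt T) (Arr (prodP (Wt T) NN) NN (evf T U) Hev).

Definition s2el (T : arr N3 NN) (U : arr NN NN) Hev (f : car (Wt T)) (x : nat) :
  car (dom (A4 T U Hev)).
Proof.
  set (y := minT T (proj1_sig f) x (proj2_sig f x)).
  set (c4 := ((((tt, f), proj1_sig f), x), y) : car (ctx4 (Wt T))).
  refine (exist _ (exist _ (c4, 1) _, exist _ (c4, U y) _) _).
  all: try reflexivity.
  Unshelve. all: try reflexivity. simpl. unfold c4, y. simpl. f_equal. apply minT_one.
Defined.

Lemma s2el_proj T U Hev f x : proj (A4 T U Hev) (s2el T U Hev f x) = ((((tt, f), proj1_sig f), x), minT T (proj1_sig f) x (proj2_sig f x)).
Proof. reflexivity. Qed.

Lemma s2el_tr T U Hev f x : tr (dom (A4 T U Hev)) (s2el T U Hev f x) =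
  let C := cpair (cpair (cpair (cpair 0 (proj1_sig f)) (proj1_sig f)) x) (minT T (proj1_sig f) x (proj2_sig f x)) in
  cpair (cpair C 1) (cpair C (U (minT T (proj1_sig f) x (proj2_sig f x)))).
Proof. reflexivity. Qed.


Definition A3 T U Hev := @existsP (ctx3 (Wt T)) NN (A4 T U Hev).
Definition A2 T U Hev := @forallP (ctx2 (Wt T)) NN (A3 T U Hev).
Definition A1 T U Hev := @existsP (ctx1 (Wt T)) NN (A2 T U Hev).

Definition muC2 cT := cMu (cComp notC [cComp cT [cComp cpairC [cComp cpairC [cProj 1; cProj 2]; cProj 0]]]).
Definition CcC := cComp cpairC [cComp cpairC [cComp cpairC [cComp cpairC [K 0; cProj 1]; cProj 1]; cProj 2]; cProj 0].
Definition HC cU := cComp cpairC [cComp cpairC [CcC; K 1]; cComp cpairC [CcC; cComp cU [cProj 0]]].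
Definition G2 cT cU := cComp (HC cU) [muC2 cT; cProj 0; cProj 1].

Lemma eval_G2 (T : arr N3 NN) (U : arr NN NN) cT cU
  (H01 : forall e x y, T ((e, x), y) = 0 \/ T ((e, x), y) = 1)
  (HcT : forall a : nat * nat * nat, eval cT [cpair (cpair (fst (fst a)) (snd (fst a))) (snd a)] (T a))
  (HcU : forall a, eval cU [a] (U a)) Hev (f : car (Wt T)) x :
  eval (G2 cT cU) [proj1_sig f; x] (tr (dom (A4 T U Hev)) (s2el T U Hev f x)).
Proof.
  rewrite s2el_tr. cbv zeta.
  destruct (minT_spec T (proj1_sig f) x (proj2_sig f x) H01) as [HA HB].
  set (m := minT T (proj1_sig f) x (proj2_sig f x)) in *.
  eapply comp3.
  - eapply (eval_mu cT (fun y => T ((proj1_sig f, x), y)) _ (fun y => cpair (cpair (proj1_sig f) x) y)).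
    + intro y. exact (HcT ((_, _), _)).
    + intro y. apply eval_cpair'. apply eval_cpair'. apply eval_proj1. apply eval_proj2. apply eval_proj0.
    + exact HA.
    + exact HB.
  - apply eval_proj0.
  - apply eval_proj1.
  - assert (HCc : eval CcC [m; proj1_sig f; x] (cpair (cpair (cpair (cpair 0 (proj1_sig f)) (proj1_sig f)) x) m)).
    { apply eval_cpair'. apply eval_cpair'. apply eval_cpair'. apply eval_cpair'.
      apply eval_K. apply eval_proj1. apply eval_proj1. apply eval_proj2. apply eval_proj0. }
    apply eval_cpair'. apply eval_cpair'. exact HCc. apply eval_K.
    apply eval_cpair'. exact HCc. eapply comp1. apply eval_proj0. apply HcU.
Qed.

Definition secA1 (T : arr N3 NN) (U : arr NN NN) cT cU
  (H01 : forall e x y, T ((e, x), y) = 0 \/ T ((e, x), y) = 1)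
  (HcT : forall a : nat * nat * nat, eval cT [cpair (cpair (fst (fst a)) (snd (fst a))) (snd a)] (T a))
  (HcU : forall a, eval cU [a] (U a)) Hev (f : car (Wt T)) :
  { w : car (dom (A1 T U Hev)) | proj (A1 T U Hev) w = (tt, f) }.
Proof.
  refine (exist _ (existT _ ((tt, f), proj1_sig f) (existT _ (fun b => exist _ (s2el T U Hev f b) eq_refl)
     (exist _ (encode (cComp (G2 cT cU) [K (proj1_sig f); cProj 0])) _))) eq_refl).
  intro b. eexists. split; [reflexivity|]. apply eval_smn_app. simpl.
  exact (eval_G2 T U cT cU H01 HcT HcU Hev f b).
Defined.

Lemma secA1_tr T U cT cU H01 HcT HcU Hev f :
  tr (dom (A1 T U Hev)) (proj1_sig (secA1 T U cT cU H01 HcT HcU Hev f)) =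
  cpair (cpair (cpair 0 (proj1_sig f)) (proj1_sig f)) (encode (cComp (G2 cT cU) [K (proj1_sig f); cProj 0])).
Proof. reflexivity. Qed.

Definition OC cT cU := cComp cpairC [cComp cpairC [cComp cpairC [K 0; cProj 0]; cProj 0]; smnC (G2 cT cU)].

Lemma rec_provable (T : arr N3 NN) (U : arr NN NN) cT cU
  (H01 : forall e x y, T ((e, x), y) = 0 \/ T ((e, x), y) = 1)
  (HcT : forall a : nat * nat * nat, eval cT [cpair (cpair (fst (fst a)) (snd (fst a))) (snd a)] (T a))
  (HcU : forall a, eval cU [a] (U a)) Hev :
  provable (all_Rec T U (Wt T) (Arr (prodP (Wt T) NN) NN (evf T U) Hev)).
Proof.
  assert (HO : forall f : car (Wt T), phi (encode (OC cT cU)) (tr (Wt T) f)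
     (tr (dom (A1 T U Hev)) (proj1_sig (secA1 T U cT cU H01 HcT HcU Hev f)))).
  { intro f. exists (OC cT cU). split; [reflexivity|]. rewrite secA1_tr.
    apply eval_cpair'. apply eval_cpair'. apply eval_cpair'. apply eval_K.
    apply eval_proj0. apply eval_proj0. apply eval_smn. }
  unfold provable, leq.
  exists (fun _ => existT _ tt (existT _ (secA1 T U cT cU H01 HcT HcU Hev) (exist _ (encode (OC cT cU)) HO))).
  split.
  - exists (encode (K (cpair 0 (encode (OC cT cU))))). intro a.
    eexists. split; [reflexivity|]. apply eval_K.
  - intros []. reflexivity.
Qed.

Theorem proposition4p8 :
  forall (T : arr N3 NN) (U : arr NN NN), kleene_TU T U -> TCT T U.
Proof.
  intros T U [H01 HK].
  destruct (track_code N3 NN T ((0,0),0) (fn_tr _ _ T)) as [cT HcT].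
  destruct (track_code NN NN U 0 (fn_tr _ _ U)) as [cU HcU].
  simpl in HcT, HcU.
  set (evC := cComp cU [cMu (cComp notC [cComp cT [cComp cpairC [cProj 1; cProj 0]]])]).
  assert (Hev : tracked (prodP (Wt T) NN) NN (evf T U)).
  { exists (encode evC). intros [w n]. exists evC. split; [reflexivity|].
    simpl. eapply comp1. 2: apply HcU.
    destruct (minT_spec T (proj1_sig w) n (proj2_sig w n) H01) as [A B].
    eapply (eval_mu cT (fun y => T ((proj1_sig w, n), y)) _ (fun y => cpair (cpair (proj1_sig w) n) y)).
    - intro y. exact (HcT ((_, _), _)).
    - intro y. apply eval_cpair'. apply eval_proj1. apply eval_proj0.
    - exact A.
    - exact B. }
  exists (Wt T), (Arr (prodP (Wt T) NN) NN (evf T U) Hev). split.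
  - intros X g. destruct (classic (inhabited (car X))) as [[x0]|Hne].
    + destruct (track_code _ _ g (x0, 0) (fn_tr _ _ g)) as [cg Hcg]. simpl in Hcg.
      set (Ek := fun k => encode (cComp cg [cComp cpairC [K k; cProj 0]])).
      assert (Hphi : forall x n, phi (Ek (tr X x)) n (g (x, n))).
      { intros x n. exists (cComp cg [cComp cpairC [K (tr X x); cProj 0]]). split; [reflexivity|].
        eapply comp1. apply eval_cpair'. apply eval_K. apply eval_proj0. exact (Hcg (x, n)). }
      assert (Htot : forall x n, exists y, T ((Ek (tr X x), n), y) = 1).
      { intros x n. destruct (proj1 (HK _ _ _) (Hphi x n)) as [y [Hy _]]. eauto. }
      set (hf := fun x => (exist _ (Ek (tr X x)) (Htot x) : car (Wt T))).
      assert (Htr : tracked X (Wt T) hf).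
      { set (hC := cComp cpairC [K 3; cComp cpairC [K (encode cg); cComp cSucc [cComp cpairC [smnC cpairC; K 0]]]]).
        exists (encode hC). intro x. exists hC. split; [reflexivity|]. simpl.
        unfold Ek. rewrite enc_comp1. apply eval_cpair'. apply eval_K. apply eval_cpair'. apply eval_K.
        eapply comp1. apply eval_cpair'. apply eval_smn. apply eval_K. apply eval_succ. }
      exists (Arr X (Wt T) hf Htr). intros x n. simpl. unfold evf. simpl.
      destruct (minT_spec T (Ek (tr X x)) n (Htot x n) H01) as [A _].
      apply (phi_fun (Ek (tr X x)) n). 2: apply Hphi.
      apply (proj2 (HK _ _ _)). eauto.
    + exists (Arr X (Wt T) (fun x => False_rect _ (Hne (inhabits x))) (ex_intro _ 0 (fun x => False_ind _ (Hne (inhabits x))))).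
      intros x. exfalso. exact (Hne (inhabits x)).
  - exact (rec_provable T U cT cU H01 HcT HcU Hev).
Qed.

Print Assumptions proposition4p8.
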